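(* Assume the sparsity setting with $1\le p\le2$. Let $(c^\ast,s^\ast)\in X\times Y$, $u^\ast=B(c^\ast,s^\ast)$, with $c^\ast$ a $\Phi_p$-minimizing solution, and let $u_\delta\in Z$, $s_{\mathrm{mod},\epsilon}\in Y$ with $\|u^\ast-u_\delta\|\le\delta$, $\|s^\ast-s_{\mathrm{mod},\epsilon}\|\le\epsilon$. Let $0<\alpha_{\max}<\infty$ and assume there exist $\kappa_1\in[0,1)$, $\kappa_2\ge0$, $0\le\kappa_3<\min\{1,\gamma/(2\alpha_{\max})\}$ and $\xi^\ast=(\xi_{c^\ast},\xi_{s^\ast})\in\partial\tilde{\mathcal{R}}(c^\ast,s^\ast)$ such that for all $(c,s)\in X\times Y$ $$\langle\xi^\ast,(c^\ast-c,s^\ast-s)\rangle\le\kappa_1D^{\xi^\ast}_{\tilde{\mathcal{R}}}((c,s),(c^\ast,s^\ast))+\kappa_2\|B(c,s)-B(c^\ast,s^\ast)\|+\kappa_3\|s-s^\ast\|^2.$$ For $0<\alpha\le\alpha_{\max}$ let $(c^\alpha,s^\alpha)$ be a minimizer of $J^{u_\delta,s_{\mathrm{mod},\epsilon}}_{\alpha,\nu_1\alpha,\nu_2\alpha}$. If $\alpha\sim\delta+\epsilon$, then as $\delta+\epsilon\to0$ $$D^{\xi^\ast}_{\tilde{\mathcal{R}}}((c^\alpha,s^\alpha),(c^\ast,s^\ast))=\mathcal{O}(\delta+\epsilon),\qquad\|B(c^\alpha,s^\alpha)-B(c^\ast,s^\ast)\|=\mathcal{O}(\delta+\epsilon).$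$
   Context: Sparsity setting: $X,Y,Z$ are Hilbert spaces; $X\times Y$ carries the inner product $\langle (c_1,s_1),(c_2,s_2)\rangle=\langle c_1,c_2\rangle_X+\langle s_1,s_2\rangle_Y$. $B:X\times Y\to Z$ is bilinear, satisfies $\|B(c,s)\|_Z\le C\|c\|_X\|s\|_Y$ for some $C>0$, and is sequentially weak-weak continuous. $Y_n\subset Y$ is a finite-dimensional subspace, $P:Y\to Y_n$ is linear and bounded, $s_{\mathrm{calib}}\in Y_n$. $\mathcal{R}_s:Y\to[0,\infty)$ is proper, convex and weakly lower semi-continuous. $\{\varphi_i\}_{i\in\mathbb{N}}$ is an orthonormal basis of $X$, weights satisfy $1\le w_i<\infty$, and $\Phi_p(c)=\sum_iw_i|\langle c,\varphi_i\rangle|^p$. Fix $\gamma>0$ and $\nu_1,\nu_2\in(0,\infty)$. $J^{u,s_m}_{\alpha,\beta,\mu}(c,s)=\frac12\|B(c,s)-u\|^2+\frac{\gamma}{2}\|s-s_m\|^2+\frac{\mu}{2}\|P(s)-s_{\mathrm{calib}}\|^2+\alpha\Phi_p(c)+\beta\mathcal{R}_s(s)$; $\tilde{\mathcal{R}}(c,s)=\Phi_p(c)+\frac{\nu_2}{2}\|P(s)-s_{\mathrm{calib}}\|^2+\nu_1\mathcal{R}_s(s)$. $c^\ast$ is a $\Phi_p$-minimizing solution if $c^\ast\in\arg\min\{\Phi_p(c):B(c,s^\ast)=u^\ast\}$. For a convex functional $\mathcal{R}$ and $\xi\in\partial\mathcal{R}(x^\ast)$, $D^{\xi}_{\mathcal{R}}(x,x^\ast)=\mathcal{R}(x)-\mathcal{R}(x^\ast)-\langle\xi,x-x^\ast\rangle$.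 $\alpha\sim\delta+\epsilon$ means $m(\delta+\epsilon)\le\alpha\le M(\delta+\epsilon)$ for constants $0<m\le M$. *)

(* Defs.v *)
From HB Require Import structures.
From mathcomp Require Import all_boot all_order all_algebra.
From mathcomp Require Import all_classical all_reals all_analysis.
Set Implicit Arguments. Unset Strict Implicit. Unset Printing Implicit Defensive.
Import Order.TTheory GRing.Theory Num.Theory.
Import numFieldNormedType.Exports.
Local Open Scope classical_set_scope.
Local Open Scope ring_scope.

Section Defs.
Variable R : realType.

(* [ip] is a (real) inner product inducing the norm of the normed module X.
   Together with X : completeNormedModType R this makes X a real Hilbert space. *)
Definition is_inner_product (X : normedModType R) (ip : X -> X -> R) : Prop :=
  [/\ (forall x y, ip x y = ip y x),
      (forall (a : R) (x y z : X), ip (a *: x + y) z = a * ip x z + ip y z)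
    & (forall x, `|x| = Num.sqrt (ip x x))].

Definition weak_cvg (X : normedModType R) (ip : X -> X -> R)
  (u : nat -> X) (x : X) : Prop :=
  forall y, (fun n => ip (u n) y) @ \oo --> ip x y.

Definition prod_ip (X Y : normedModType R) (ipX : X -> X -> R) (ipY : Y -> Y -> R)
  (a b : X * Y) : R := ipX a.1 b.1 + ipY a.2 b.2.

Definition weak_cvg_prod (X Y : normedModType R) (ipX : X -> X -> R) (ipY : Y -> Y -> R)
  (u : nat -> X * Y) (x : X * Y) : Prop :=
  forall y, (fun n => prod_ip ipX ipY (u n) y) @ \oo --> prod_ip ipX ipY x y.

Definition bilinear_map (X Y Z : normedModType R) (B : X -> Y -> Z) : Prop :=
  (forall (a : R) c1 c2 s, B (a *: c1 + c2) s = a *: B c1 s + B c2 s) /\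
  (forall (a : R) c s1 s2, B c (a *: s1 + s2) = a *: B c s1 + B c s2).

Definition seq_weak_weak_continuous (X Y Z : normedModType R)
  (ipX : X -> X -> R) (ipY : Y -> Y -> R) (ipZ : Z -> Z -> R) (B : X -> Y -> Z) : Prop :=
  forall (u : nat -> X * Y) (x : X * Y), weak_cvg_prod ipX ipY u x ->
    weak_cvg ipZ (fun n => B (u n).1 (u n).2) (B x.1 x.2).

Definition finite_dim_subspace (Y : normedModType R) (V : set Y) : Prop :=
  exists (n : nat) (e : 'I_n -> Y),
    V = [set y | exists a : 'I_n -> R, y = \sum_(i < n) a i *: e i].

Definition linear_map (Y Y' : normedModType R) (P : Y -> Y') : Prop :=
  forall (a : R) x y, P (a *: x + y) = a *: P x + P y.

Definition bounded_map (Y Y' : normedModType R) (P : Y -> Y') : Prop :=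
  exists K : R, forall y, `|P y| <= K * `|y|.

Definition convex_fun (Y : normedModType R) (f : Y -> R) : Prop :=
  forall (t : R) x y, 0 <= t <= 1 ->
    f (t *: x + (1 - t) *: y) <= t * f x + (1 - t) * f y.

(* sequential weak lower semicontinuity: x_n -> x weakly implies
   f x <= liminf f x_n (written out with epsilons) *)
Definition weakly_lsc (Y : normedModType R) (ipY : Y -> Y -> R) (f : Y -> R) : Prop :=
  forall (u : nat -> Y) (x : Y), weak_cvg ipY u x ->
    forall e : R, 0 < e -> \forall n \near \oo, f x - e < f (u n).

Definition orthonormal_basis (X : normedModType R) (ipX : X -> X -> R)
  (phi : nat -> X) : Prop :=
  (forall i j, ipX (phi i) (phi j) = (i == j)%:R) /\
  (forall x, (fun n => \sum_(i < n) ipX x (phi i) *: phi i) @ \oo --> x).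

Definition Phi_p (X : normedModType R) (ipX : X -> X -> R) (phi : nat -> X)
  (w : nat -> R) (p : R) (c : X) : \bar R :=
  (\sum_(0 <= i <oo) ((w i * `|ipX c (phi i)| `^ p)%:E))%E.

(* subgradient of an extended-real functional F at x w.r.t. the duality
   pairing [pair] (here an inner product); as usual, F x must be finite *)
Definition is_subgradient (T : zmodType) (F : T -> \bar R) (pair : T -> T -> R)
  (xi x : T) : Prop :=
  F x \is a fin_num /\ (forall y, (F x + (pair xi (y - x))%:E <= F y)%E).

Definition bregman (T : zmodType) (F : T -> \bar R) (pair : T -> T -> R)
  (xi y x : T) : \bar R :=
  (F y - F x - (pair xi (y - x))%:E)%E.

Definition Rtilde (X Y : normedModType R) (ipX : X -> X -> R) (phi : nat -> X)
  (w : nat -> R) (p : R) (P : Y -> Y) (s_calib : Y) (Rs : Y -> R) (nu1 nu2 : R)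
  (x : X * Y) : \bar R :=
  (Phi_p ipX phi w p x.1
   + ((nu2 / 2) * `|P x.2 - s_calib| ^+ 2 + nu1 * Rs x.2)%:E)%E.

Definition Jfun (X Y Z : normedModType R) (B : X -> Y -> Z) (ipX : X -> X -> R)
  (phi : nat -> X) (w : nat -> R) (p : R) (P : Y -> Y) (s_calib : Y) (Rs : Y -> R)
  (gamma : R) (u : Z) (s_m : Y) (alpha beta mu : R) (x : X * Y) : \bar R :=
  (((1 / 2) * `|B x.1 x.2 - u| ^+ 2 + (gamma / 2) * `|x.2 - s_m| ^+ 2
     + (mu / 2) * `|P x.2 - s_calib| ^+ 2)%:E
   + alpha%:E * Phi_p ipX phi w p x.1 + (beta * Rs x.2)%:E)%E.

End Defs.

(* Main.v *)
Require Import Defs.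
From HB Require Import structures.
From mathcomp Require Import all_boot all_order all_algebra.
From mathcomp Require Import all_classical all_reals all_analysis.
Import Order.TTheory GRing.Theory Num.Theory.
Import numFieldNormedType.Exports.
Local Open Scope classical_set_scope.
Local Open Scope ring_scope.
From mathcomp Require Import ring lra.

Lemma sqle (R : realType) (x y : R) : 0 <= x -> x <= y -> x^+2 <= y^+2.
Proof. by move=> h1 h2; rewrite !expr2 ler_pM. Qed.

Lemma core (R : realType) (gamma k1 k2 k3 amax m M : R) :
 0 < gamma -> 0 <= k1 -> k1 < 1 -> 0 <= k2 -> 0 <= k3 -> k3 * amax < gamma/2 ->
 0 < amax -> 0 < m -> m <= M ->
 exists K : R, forall d e al a b g t D L d0 e0 : R,
 0 <= d -> 0 <= e -> 0 <= d0 -> d0 <= d -> 0 <= e0 -> e0 <= e -> 0 < al -> al <= amax ->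
 m*(d+e) <= al -> al <= M*(d+e) -> 0 <= a -> 0 <= b -> 0 <= g -> 0 <= t -> 0 <= D ->
 a^+2/2 + gamma/2*b^+2 + al*(D+L) <= d0^+2/2 + gamma/2*e0^+2 ->
 -L <= k1*D + k2*g + k3*t^+2 ->
 g <= a + d -> t <= b + e ->
 D <= K*(d+e) /\ g <= K*(d+e).
Proof.
move=> hg hk1 hk1' hk2 hk3 hk3' ham hm hmM.
set k0 := k3 * amax.
set c0 := gamma/2 - k0.
have hc0 : 0 < c0 by rewrite /c0 subr_gt0.
have hk0 : 0 <= k0 := mulr_ge0 hk3 (ltW ham).
set C := k0 + k0^+2/c0.
have hC : 0 <= C by rewrite /C addr_ge0 // divr_ge0 // ?sqr_ge0 // ltW.
set A := 1/2 + gamma/2 + C + M*k2.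
have hM : 0 < M by lra.
have hA : 0 <= A by rewrite /A; have := mulr_ge0 (ltW hM) hk2; lra.
set K1 := 2*M*k2 + 2*A + 1.
have hK1 : 1 <= K1 by rewrite /K1; have := mulr_ge0 (ltW hM) hk2; lra.
have hm1 : 0 < m*(1-k1) by rewrite mulr_gt0 //; lra.
set K2 := (A + M*k2*K1)/(m*(1-k1)).
exists (K1 + 1 + K2) => d e al a b g t D L d0 e0 hd he hd0 hd0' he0 he0' hal halm
  hmal hMal ha hb hgg ht hD hJ hS hga htb.
set S := d + e.
have hS0 : 0 < S by rewrite /S; nra.
have hK2 : 0 <= K2.
  rewrite /K2 divr_ge0 //; last lra.
  by rewrite addr_ge0 // !mulr_ge0 //; lra.
have hk : al * k3 <= k0 by rewrite /k0 mulrC ler_wpM2l.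
have hk' : 0 <= al * k3 by rewrite mulr_ge0 //; lra.
have step1 : al * k3 * t^+2 <= gamma/2 * b^+2 + C * e^+2.
  have ht2 : t^+2 <= (b+e)^+2 by apply: sqle.
  have q1 : al*k3*t^+2 <= al*k3*(b+e)^+2 by rewrite ler_wpM2l.
  set q := al*k3/c0.
  have hq : al*k3 = q*c0 by rewrite /q divfK //; lra.
  have hq0 : 0 <= q by rewrite /q divr_ge0 //; lra.
  have hqk : q*(al*k3) <= k0^+2/c0.
    by rewrite /q mulrAC -expr2 ler_pM2r ?invr_gt0 // sqle.
  have hsq : 0 <= c0 * (b - q*e)^+2 by rewrite mulr_ge0 ?sqr_ge0 //; lra.
  have E1 : al*k3*(b+e)^+2 = al*k3*b^+2 + 2*(q*c0)*b*e + al*k3*e^+2.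
    by rewrite -hq; ring.
  have E2 : c0*(b-q*e)^+2 = c0*b^+2 - 2*(q*c0)*b*e + q*(al*k3)*e^+2.
    by rewrite hq; ring.
  have he2 : 0 <= e^+2 by rewrite sqr_ge0.
  have T1 : q*(al*k3)*e^+2 <= k0^+2/c0 * e^+2 by rewrite ler_wpM2r.
  have T2 : al*k3*b^+2 <= k0 * b^+2 by rewrite ler_wpM2r // sqr_ge0.
  have T3 : al*k3*e^+2 <= k0 * e^+2 by rewrite ler_wpM2r.
  have E3 : gamma/2 * b^+2 + C * e^+2 = k0 * b^+2 + c0 * b^+2 + k0^+2/c0 * e^+2 + k0 * e^+2.
    by rewrite /C /c0; ring.
  lra.
have hal0 : 0 <= al by lra.
have F1 : al * (-L) <= al * (k1*D + k2*g + k3*t^+2) by rewrite ler_wpM2l.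
have E4 : al * (k1*D + k2*g + k3*t^+2) = k1*(al*D) + k2*(al*g) + al*k3*t^+2 by ring.
have E5 : al*(D+L) = al*D - al*(-L) by ring.
have hdS : d <= S by rewrite /S; lra.
have heS : e <= S by rewrite /S; lra.
have G1 : d0^+2 <= S^+2 by apply: sqle => //; lra.
have G2 : e0^+2 <= S^+2 by apply: sqle => //; lra.
have G3 : e^+2 <= S^+2 by apply: sqle.
have G4 : al*g <= al*a + al*d by rewrite -mulrDr ler_wpM2l.
have G5 : al*d <= M*S*S by apply: ler_pM => //; lra.
have G6 : C * e^+2 <= C * S^+2 by rewrite ler_wpM2l.
have G7 : gamma/2 * e0^+2 <= gamma/2 * S^+2 by rewrite ler_wpM2l //; lra.
have G8 : k1 * (al * D) <= al * D by apply: ler_piMl; [exact: mulr_ge0 | lra].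
have G9 : k2 * (al*d) <= k2 * (M*S*S) by rewrite ler_wpM2l.
have G10 : k2 * (al*g) <= k2 * (al*a) + k2*(al*d) by rewrite -mulrDr ler_wpM2l.
have E6 : A * S^+2 = S^+2/2 + gamma/2 * S^+2 + C * S^+2 + k2*(M*S*S).
  by rewrite /A; ring.
have key2 : a^+2/2 + (al*D - k1*(al*D)) <= A*S^+2 + k2*(al*a) by lra.
have hal1 : al * a <= M*S*a by rewrite ler_wpM2r.
have hk2a : k2*(al*a) <= k2*(M*S*a) by rewrite ler_wpM2l.
have G11 : 0 <= al*D - k1*(al*D) by have := mulr_ge0 hal0 hD; lra.
have key3 : a^+2/2 <= A*S^+2 + k2*(M*S*a) by lra.
have haK : a <= K1 * S.
  rewrite leNgt; apply/negP => H.
  have hK1S : 0 < K1 * S by rewrite mulr_gt0 //; lra.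
  have ha0 : 0 < a by apply: lt_trans H.
  have H1 : K1 * S * a < a * a by rewrite ltr_pM2r.
  have H3a : S <= K1 * S by rewrite -{1}[S]mul1r ler_wpM2r //; lra.
  have H2 : K1 * S * S < K1 * S * a by rewrite ltr_pM2l //; lra.
  have E7 : K1*S*a = 2*(k2*(M*S*a)) + 2*(A*(S*a)) + S*a by rewrite /K1; ring.
  have H7 : A*(S*S) <= A*(S*a) by rewrite ler_wpM2l // ler_wpM2l //; lra.
  have H8 : 0 < S*a by rewrite mulr_gt0.
  rewrite expr2 in key3; rewrite [S^+2]expr2 in key3.
  clear -key3 H1 E7 H7 H8; lra.
have haK' : k2*(M*S*a) <= k2*(M*S*(K1*S)) by rewrite ler_wpM2l // ler_wpM2l // mulr_ge0 //; lra.
have hD1 : al*D - k1*(al*D) <= A*S^+2 + k2*(M*S*(K1*S)).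
  have a2 : 0 <= a^+2/2 by rewrite divr_ge0 ?sqr_ge0.
  by clear -key2 hk2a haK' a2; lra.
have hD2 : (m*(1-k1)*S) * D <= al*D - k1*(al*D).
  have -> : al*D - k1*(al*D) = (1-k1)*(al*D) by ring.
  have -> : (m*(1-k1)*S) * D = (1-k1)*((m*S)*D) by ring.
  apply: ler_wpM2l; first lra. apply: ler_wpM2r => //; lra.
have hDK : D <= K2 * S.
  have hpos : 0 < m*(1-k1)*S by rewrite mulr_gt0.
  have hm1' : m*(1-k1) != 0 by rewrite gt_eqF.
  have EK : m*(1-k1) * K2 = A + M*k2*K1 by rewrite /K2 mulrCA divff ?mulr1.
  have H : (m*(1-k1)*S) * D <= (m*(1-k1)*S) * (K2*S).
    have -> : (m*(1-k1)*S) * (K2*S) = A*S^+2 + k2*(M*S*(K1*S)).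
      transitivity ((m*(1-k1)*K2)*S^+2); first ring.
      rewrite EK; ring.
    exact: le_trans hD2 hD1.
  by rewrite ler_pM2l in H.
have hK2S : 0 <= K2 * S by rewrite mulr_ge0 //; lra.
have hK1S : K1 * S + S = (K1 + 1) * S by ring.
have hEK : (K1 + 1 + K2) * (d + e) = (K1 + 1) * S + K2 * S by rewrite /S; ring.
rewrite hEK; split; first by clear -hDK hK1S hK2S hS0 hK1; nra.
have : g <= K1 * S + S by clear -hga haK hdS; lra.
rewrite hK1S => h; clear -h hK2S; lra.
Qed.
Lemma ip_opp (R : realType) (X : normedModType R) (ip : X -> X -> R) :
  is_inner_product ip -> forall z a b : X, ip z (a - b) = - ip z (b - a).
Proof.
case=> hs hl _ z a b.
have h0 : forall y, ip 0 y = 0.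
  by move=> y; have := hl 1 0 0 y; rewrite scale1r addr0 mul1r => E; lra.
have -> : b - a = (-1) *: (a - b) + 0 by rewrite addr0 scaleN1r opprB.
by rewrite (hs z ((-1) *: (a - b) + 0)) hl h0 addr0 mulN1r opprK hs.
Qed.

Theorem mainTheorem12
  (R : realType) (X Y Z : completeNormedModType R)
  (ipX : X -> X -> R) (ipY : Y -> Y -> R) (ipZ : Z -> Z -> R)
  (hipX : is_inner_product ipX) (hipY : is_inner_product ipY)
  (hipZ : is_inner_product ipZ)
  (B : X -> Y -> Z) (hBlin : bilinear_map B)
  (CB : R) (hCB : 0 < CB) (hBbd : forall c s, `|B c s| <= CB * `|c| * `|s|)
  (hBweak : seq_weak_weak_continuous ipX ipY ipZ B)
  (Yn : set Y) (hYn : finite_dim_subspace Yn)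
  (P : Y -> Y) (hPlin : linear_map P) (hPbd : bounded_map P)
  (hPYn : forall y, Yn (P y))
  (s_calib : Y) (hcalib : Yn s_calib)
  (Rs : Y -> R) (hRs0 : forall y, 0 <= Rs y) (hRsconv : convex_fun Rs)
  (hRslsc : weakly_lsc ipY Rs)
  (phi : nat -> X) (hphi : orthonormal_basis ipX phi)
  (w : nat -> R) (hw : forall i, 1 <= w i)
  (gamma nu1 nu2 : R) (hgamma : 0 < gamma) (hnu1 : 0 < nu1) (hnu2 : 0 < nu2)
  (p : R) (hp : 1 <= p <= 2)
  (c_star : X) (s_star : Y)
  (hmin : forall c : X, B c s_star = B c_star s_star ->
     (Phi_p ipX phi w p c_star <= Phi_p ipX phi w p c)%E)
  (alpha_max : R) (halpha_max : 0 < alpha_max)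
  (kappa1 kappa2 kappa3 : R)
  (hk1 : 0 <= kappa1 < 1) (hk2 : 0 <= kappa2)
  (hk3 : 0 <= kappa3) (hk3' : kappa3 < Num.min 1 (gamma / (2 * alpha_max)))
  (xi : X * Y)
  (hxi : is_subgradient (Rtilde ipX phi w p P s_calib Rs nu1 nu2)
           (prod_ip ipX ipY) xi (c_star, s_star))
  (hsource : forall (c : X) (s : Y),
     ((prod_ip ipX ipY xi (c_star - c, s_star - s))%:E
      <= kappa1%:E * bregman (Rtilde ipX phi w p P s_calib Rs nu1 nu2)
                       (prod_ip ipX ipY) xi (c, s) (c_star, s_star)
         + (kappa2 * `|B c s - B c_star s_star| + kappa3 * `|s - s_star| ^+ 2)%:E)%E) :
  forall m M : R, 0 < m -> m <= M ->
  exists K eta : R, 0 < eta /\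
  forall (delta eps : R) (u_delta : Z) (s_mod : Y) (alpha : R) (x : X * Y),
    0 <= delta -> 0 <= eps -> delta + eps < eta ->
    `|B c_star s_star - u_delta| <= delta ->
    `|s_star - s_mod| <= eps ->
    0 < alpha -> alpha <= alpha_max ->
    m * (delta + eps) <= alpha <= M * (delta + eps) ->
    (forall y : X * Y,
       (Jfun B ipX phi w p P s_calib Rs gamma u_delta s_mod alpha (nu1 * alpha) (nu2 * alpha) x
        <= Jfun B ipX phi w p P s_calib Rs gamma u_delta s_mod alpha (nu1 * alpha) (nu2 * alpha) y)%E) ->
    (bregman (Rtilde ipX phi w p P s_calib Rs nu1 nu2) (prod_ip ipX ipY) xi x (c_star, s_star)
       <= (K * (delta + eps))%:E)%E /\
    `|B x.1 x.2 - B c_star s_star| <= K * (delta + eps).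
Proof.
move=> m M hm hmM.
case/andP: hk1 => hk1a hk1b.
have hk3s : kappa3 * alpha_max < gamma / 2.
  move: hk3'; rewrite lt_min => /andP[_].
  by rewrite invfM mulrA ltr_pdivlMr.
have [K hK] := @core R gamma kappa1 kappa2 kappa3 alpha_max m M hgamma hk1a hk1b hk2 hk3 hk3s halpha_max hm hmM.
exists K, 1; split; first exact: ltr01.
move=> delta eps ud sm al [c s] hd he _ hud hsm hal halm /andP[hmal hMal] hJ.
have Phi0 : forall c0, (0 <= Phi_p ipX phi w p c0)%E.
  move=> c0; apply: nneseries_ge0 => n _ _; rewrite lee_fin mulr_ge0 ?powR_ge0 //.
  exact: le_trans ler01 (hw n).
case: hxi => hfin hsub.
have [fs Efs] : exists r, Phi_p ipX phi w p c_star = r%:E.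
  move: hfin; rewrite /Rtilde fin_numD => /andP[+ _].
  by case: (Phi_p ipX phi w p c_star) => // r _; exists r.
have HJ := hJ (c_star, s_star).
have [f Ef] : exists r, Phi_p ipX phi w p c = r%:E.
  move: HJ (Phi0 c); rewrite /Jfun /= Efs.
  case: (Phi_p ipX phi w p c) => [r _ _| |]; [by exists r| |by []].
  by rewrite gt0_muley ?lte_fin.
have HS := hsource c s.
have HSub := hsub (c, s).
move: HJ HS HSub; rewrite /Jfun /Rtilde /bregman /= Ef Efs => HJ HS HSub.
have HLs : prod_ip ipX ipY xi (c_star - c, s_star - s)
          = - prod_ip ipX ipY xi ((c, s) - (c_star, s_star)).
  by rewrite /prod_ip /= (@ip_opp _ _ _ hipX xi.1 c_star c) (@ip_opp _ _ _ hipY xi.2 s_star s) opprD.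
rewrite HLs in HS.
pose L := prod_ip ipX ipY xi ((c, s) - (c_star, s_star)).
pose q := `|P s - s_calib|. pose qs := `|P s_star - s_calib|.
pose a := `|B c s - ud|. pose b := `|s - sm|.
pose d0 := `|B c_star s_star - ud|. pose e0 := `|s_star - sm|.
pose g := `|B c s - B c_star s_star|. pose t := `|s - s_star|.
pose D := f + (nu2/2*q^+2 + nu1*Rs s) - (fs + (nu2/2*qs^+2 + nu1*Rs s_star)) - L.
have HJr : 1/2*a^+2 + gamma/2*b^+2 + nu2*al/2*q^+2 + al*f + nu1*al*Rs s
    <= 1/2*d0^+2 + gamma/2*e0^+2 + nu2*al/2*qs^+2 + al*fs + nu1*al*Rs s_star := HJ.
have HSr : - L <= kappa1 * D + (kappa2*g + kappa3*t^+2) := HS.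
have HSubr : fs + (nu2/2*qs^+2 + nu1*Rs s_star) + L <= f + (nu2/2*q^+2 + nu1*Rs s) := HSub.
have hD : 0 <= D by rewrite /D; move: HSubr; clear; move=> h; lra.
have hJc : a^+2/2 + gamma/2*b^+2 + al*(D+L) <= d0^+2/2 + gamma/2*e0^+2.
  rewrite -subr_le0.
  have -> : a^+2/2 + gamma/2*b^+2 + al*(D+L) - (d0^+2/2 + gamma/2*e0^+2)
     = (1/2*a^+2 + gamma/2*b^+2 + nu2*al/2*q^+2 + al*f + nu1*al*Rs s)
       - (1/2*d0^+2 + gamma/2*e0^+2 + nu2*al/2*qs^+2 + al*fs + nu1*al*Rs s_star).
    by rewrite /D; ring.
  by rewrite subr_le0.
have hSc : - L <= kappa1 * D + kappa2*g + kappa3*t^+2 by rewrite -addrA.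
have hga : g <= a + delta.
  have -> : g = `|(B c s - ud) + (ud - B c_star s_star)| by rewrite /g addrA subrK.
  apply: (le_trans (ler_normD _ _)); rewrite lerD2l distrC; exact: hud.
have htb : t <= b + eps.
  have -> : t = `|(s - sm) + (sm - s_star)| by rewrite /t addrA subrK.
  apply: (le_trans (ler_normD _ _)); rewrite lerD2l distrC; exact: hsm.
have [h1 h2] := hK delta eps al a b g t D L d0 e0 hd he (normr_ge0 _) hud
  (normr_ge0 _) hsm hal halm hmal hMal (normr_ge0 _) (normr_ge0 _) (normr_ge0 _)
  (normr_ge0 _) hD hJc hSc hga htb.
split; [exact: h1 | exact: h2].
Qed.
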